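(* For the impulsive system $\dot S=S(A-S)-\beta_0 IS$, $\dot I=\beta_0 IS-(\sigma+g)I$ ($t\ne nT$), $S(nT)=(1-p)S(nT^-)$, $I(nT)=I(nT^-)$, let $$\mathcal{R}_p=\frac{\beta_0}{\sigma+g}\frac1T\int_0^T\mathcal{S}(t)\,dt,\qquad \mathcal{S}(t)=\frac{A[e^{AT}(1-p)-1]}{e^{AT}(1-p)-1+pe^{A(T-t)}}\ (0\le t<T).$$ For $p\in[0,1)$ and $T>0$: (1) $\mathcal{R}_p=\mathcal{R}_0\left[\frac{\ln(1-p)}{AT}+1\right]$; (2) if $\mathcal{R}_p=1$, then the map $F_I(y)=y\exp\left\{\beta_0\int_0^T\mathcal{S}(t)\,dt\right\}e^{-(\sigma+g)T}$ has infinitely many fixed points; (3) for $T>0$ and $p>0$, $\frac{\partial\mathcal{R}_p}{\partial T}>0$ and $\frac{\partial\mathcal{R}_p}{\partial p}<0$; (4) $\lim_{T\to+\infty}\mathcal{R}_p=\mathcal{R}_0$; (5) if $p=0$ then $\mathcal{R}_p=\mathcal{R}_0$.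
   Context: Parameters: $A\in(0,1]$, $\beta_0>0$, $\sigma,g\ge0$ with $\sigma+g>0$; $\mathcal{R}_0=A\beta_0/(\sigma+g)$. $F_I$ is the time-$T$ stroboscopic map of the Infectious variable along the disease-free periodic solution $\mathcal{S}$ (extended $T$-periodically). *)

(* Defs.v *)
From Stdlib Require Import Reals List.
From Coquelicot Require Import Coquelicot.
Open Scope R_scope.

Definition Sdf (A T p t : R) : R :=
  A * (exp (A * T) * (1 - p) - 1) /
  (exp (A * T) * (1 - p) - 1 + p * exp (A * (T - t))).

Definition Rzero (A beta0 sigma g : R) : R := A * beta0 / (sigma + g).

Definition Rp (A beta0 sigma g T p : R) : R :=
  beta0 / (sigma + g) * (1 / T) * RInt (fun t => Sdf A T p t) 0 T.

Definition F_I (A beta0 sigma g T p y : R) : R :=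
  y * exp (beta0 * RInt (fun t => Sdf A T p t) 0 T) * exp (- (sigma + g) * T).

(* Main.v *)
Require Import Defs.
From Stdlib Require Import Reals List.
From Coquelicot Require Import Coquelicot.
From Stdlib Require Import Lra.
Open Scope R_scope.

Lemma den_pos A T p x : 0 < A -> 0 < T -> 0 <= p < 1 -> x <= T ->
  0 < exp (A * T) * (1 - p) - 1 + p * exp (A * (T - x)).
Proof.
  intros HA HT Hp Hx.
  assert (H1 : 1 < exp (A*T)) by (rewrite <- exp_0; apply exp_increasing; nra).
  assert (H2 : 1 <= exp (A*(T-x))).
  { rewrite <- exp_0. destruct (Rle_lt_or_eq_dec _ _ Hx) as [h|h].
    - left. apply exp_increasing; nra.
    - subst. right. f_equal. ring. }
  nra.
Qed.

Lemma RInt_Sdf A T p : 0 < A -> 0 < T -> 0 <= p < 1 ->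
  RInt (fun t => Sdf A T p t) 0 T = A * T + ln (1 - p).
Proof.
  intros HA HT Hp.
  set (c := exp (A * T) * (1 - p) - 1).
  assert (H1 : 1 < exp (A*T)) by (rewrite <- exp_0; apply exp_increasing; nra).
  assert (Hpos : forall x, x <= T -> 0 < c * exp (A*x) + p * exp (A*T)).
  { intros x Hx. pose proof (den_pos A T p x HA HT Hp Hx) as D. fold c in D.
    assert (E : exp (A*T) = exp (A*(T-x)) * exp (A*x)).
    { rewrite <- exp_plus. f_equal. ring. }
    rewrite E. pose proof (exp_pos (A*x)). nra. }
  apply is_RInt_unique.
  replace (A * T + ln (1 - p)) with
    (minus ((fun t => ln (c * exp (A*t) + p * exp (A*T))) T)
           ((fun t => ln (c * exp (A*t) + p * exp (A*T))) 0)).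
  2:{ simpl. unfold minus, plus, opp; simpl.
      replace (c * exp (A*T) + p * exp (A*T)) with (exp (A*T) * ((1-p) * (exp (A*T) - 1))) by (unfold c; ring).
      replace (c * exp (A*0) + p * exp (A*T)) with (exp (A*T) - 1)
        by (unfold c; rewrite Rmult_0_r, exp_0; ring).
      rewrite ln_mult, ln_mult, ln_exp; try lra; try apply exp_pos; try nra. }
  apply (is_RInt_derive (fun t => ln (c * exp (A*t) + p * exp (A*T)))).
  - intros x Hx. rewrite Rmin_left, Rmax_right in Hx by lra.
    pose proof (Hpos x (proj2 Hx)).
    pose proof (den_pos A T p x HA HT Hp (proj2 Hx)) as D. fold c in D.
    assert (E : exp (A*T) = exp (A*(T-x)) * exp (A*x)).
    { rewrite <- exp_plus. f_equal. ring. }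
    pose proof (exp_pos (A*x)).
    auto_derive.
    + lra.
    + unfold Sdf. fold c. rewrite E. field. repeat split; try lra. rewrite <- E; lra.
  - intros x Hx. rewrite Rmin_left, Rmax_right in Hx by lra.
    pose proof (den_pos A T p x HA HT Hp (proj2 Hx)) as D.
    apply (ex_derive_continuous (K:=R_AbsRing) (V:=R_NormedModule) (fun t => Sdf A T p t)). unfold Sdf. auto_derive. unfold Rminus in D. lra.
Qed.

Lemma Rp_closed A beta0 sigma g T p : 0 < A -> 0 < T -> 0 <= p < 1 -> 0 < sigma + g ->
  Rp A beta0 sigma g T p = beta0 / (sigma + g) * (A + ln (1 - p) / T).
Proof.
  intros HA HT Hp Hsg. unfold Rp. rewrite RInt_Sdf by lra. field. lra.
Qed.

Lemma list_miss (l : list R) : exists y, 0 <= y /\ ~ In y l.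
Proof.
  set (y := fold_right (fun x a => Rabs x + a) 1 l).
  assert (Hy : 1 <= y /\ forall x, In x l -> x < y).
  { unfold y; clear y. induction l as [|a l IH]; simpl.
    - split; [lra | tauto].
    - destruct IH as [IH1 IH2]. pose proof (Rabs_pos a). split; [lra|].
      intros x [Hax|Hx].
      + subst a. pose proof (Rle_abs x). lra.
      + pose proof (IH2 x Hx). lra. }
  exists y. split; [lra|]. intros H. pose proof (proj2 Hy y H). lra.
Qed.

Theorem lemma7 (A beta0 sigma g : R)
  (hA : 0 < A <= 1) (hb : 0 < beta0) (hs : 0 <= sigma) (hg : 0 <= g)
  (hsg : 0 < sigma + g) :
  (* (1) *)
  (forall T p, 0 < T -> 0 <= p < 1 ->
     Rp A beta0 sigma g T p = Rzero A beta0 sigma g * (ln (1 - p) / (A * T) + 1)) /\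
  (* (2) infinitely many fixed points (in [0,+oo)) of F_I when R_p = 1 *)
  (forall T p, 0 < T -> 0 <= p < 1 -> Rp A beta0 sigma g T p = 1 ->
     ~ (exists l : list R, forall y, 0 <= y ->
          F_I A beta0 sigma g T p y = y -> In y l)) /\
  (* (3) monotonicity via partial derivatives *)
  (forall T p, 0 < T -> 0 < p < 1 ->
     ex_derive (fun T' => Rp A beta0 sigma g T' p) T /\
     Derive (fun T' => Rp A beta0 sigma g T' p) T > 0 /\
     ex_derive (fun p' => Rp A beta0 sigma g T p') p /\
     Derive (fun p' => Rp A beta0 sigma g T p') p < 0) /\
  (* (4) *)
  (forall p, 0 <= p < 1 ->
     is_lim (fun T => Rp A beta0 sigma g T p) p_infty (Rzero A beta0 sigma g)) /\
  (* (5) *)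
  (forall T, 0 < T -> Rp A beta0 sigma g T 0 = Rzero A beta0 sigma g).
Proof.
  assert (HA : 0 < A) by lra.
  split; [|split; [|split; [|split]]].
  - intros T p HT Hp. rewrite Rp_closed by lra. unfold Rzero. field. lra.
  - intros T p HT Hp H1 [l Hl].
    destruct (list_miss l) as [y [Hy Hn]]. apply Hn, Hl; auto.
    unfold Rp in H1. rewrite RInt_Sdf in H1 by lra.
    unfold F_I. rewrite RInt_Sdf by lra.
    assert (E : beta0 * (A * T + ln (1 - p)) = (sigma + g) * T).
    { replace (beta0 * (A * T + ln (1 - p))) with
        (beta0 / (sigma + g) * (1 / T) * (A * T + ln (1 - p)) * ((sigma + g) * T))
        by (field; lra).
      rewrite H1. ring. }
    rewrite E, Rmult_assoc, <- exp_plus.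
    replace ((sigma + g) * T + - (sigma + g) * T) with 0 by ring.
    rewrite exp_0. ring.
  - intros T p HT Hp.
    assert (Hln : ln (1 - p) < 0).
    { rewrite <- ln_1. apply ln_increasing; lra. }
    set (f := fun T' => beta0 / (sigma + g) * (A + ln (1 - p) / T')).
    assert (Hd : is_derive f T (beta0 / (sigma + g) * (- ln (1 - p) / (T * T)))).
    { unfold f. auto_derive. lra. field. lra. }
    assert (Hloc : locally T (fun t => f t = Rp A beta0 sigma g t p)).
    { apply (locally_interval _ T 0 p_infty). simpl; lra. exact I.
      intros y Hy _. simpl in Hy. unfold f. rewrite Rp_closed by lra. reflexivity. }
    pose proof (is_derive_ext_loc _ _ _ _ Hloc Hd) as Hd'.
    set (h := fun p' => beta0 / (sigma + g) * (A + ln (1 - p') / T)).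
    assert (Hd2 : is_derive h p (beta0 / (sigma + g) * (- / (1 - p) / T))).
    { unfold h. auto_derive. lra. field. lra. }
    assert (Hloc2 : locally p (fun t => h t = Rp A beta0 sigma g T t)).
    { apply (locally_interval _ p 0 1). simpl; lra. simpl; lra.
      intros y Hy Hy'. simpl in Hy, Hy'. unfold h. rewrite Rp_closed by lra. reflexivity. }
    pose proof (is_derive_ext_loc _ _ _ _ Hloc2 Hd2) as Hd2'.
    split; [eexists; exact Hd'|]. split.
    { replace (Derive _ T) with (beta0 / (sigma + g) * (- ln (1 - p) / (T * T))) by (symmetry; apply is_derive_unique; exact Hd').
      apply Rmult_lt_0_compat.
      - apply Rdiv_lt_0_compat; lra.
      - apply Rdiv_lt_0_compat; nra. }
    split; [eexists; exact Hd2'|].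
    replace (Derive _ p) with (beta0 / (sigma + g) * (- / (1 - p) / T)) by (symmetry; apply is_derive_unique; exact Hd2').
    assert (0 < beta0 / (sigma + g)) by (apply Rdiv_lt_0_compat; lra).
    assert (0 < / (1 - p) / T) by (apply Rdiv_lt_0_compat; [apply Rinv_0_lt_compat|]; lra).
    replace (- / (1 - p) / T) with (- (/ (1 - p) / T)) by (field; lra).
    nra.
  - intros p Hp.
    apply (is_lim_ext_loc (fun T => Rzero A beta0 sigma g + (beta0 / (sigma + g) * ln (1 - p)) * / T)).
    { exists 0. intros x Hx. rewrite Rp_closed by lra. unfold Rzero. field. split; lra. }
    assert (Hi : is_lim (fun T : R => / T) p_infty 0).
    { apply (is_lim_inv (fun y => y) p_infty p_infty). apply is_lim_id. discriminate. }
    pose proof (is_lim_plus' _ _ p_infty _ _ (is_lim_const (Rzero A beta0 sigma g) p_infty)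
       (is_lim_scal_l _ (beta0 / (sigma + g) * ln (1 - p)) p_infty 0 Hi)) as H.
    simpl in H. rewrite Rmult_0_r, Rplus_0_r in H. exact H.
  - intros T HT. rewrite Rp_closed by lra. unfold Rzero.
    replace (1 - 0) with 1 by ring. rewrite ln_1. field. lra.
Qed.
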